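(* Let $n\ge2$ and let $\mathfrak{g}$ be of type $C_{n-1}$. Then \[ \widetilde{\operatorname{ps}}(\omega_{n-1})=q^{\binom{n}{2}}\operatorname{ps}(\omega_{n-1})=\operatorname{Cat}_n(q). \]
   Context: For type $C_{n-1}$, $\omega_{n-1}=\epsilon_1+\cdots+\epsilon_{n-1}$ and $\operatorname{ch}V(\omega_{n-1})$ is a Laurent polynomial in $x_1,\dots,x_{n-1}$. The principal specialization $\operatorname{ps}(\lambda)$ is $\operatorname{ch}V(\lambda)$ evaluated at $x_i=q^i$ ($1\le i\le n-1$). The normalized principal specialization is $\widetilde{\operatorname{ps}}(\lambda)=q^{-\eta}\operatorname{ps}(\lambda)$ where $\eta$ is the lowest power of $q$ occurring in $\operatorname{ps}(\lambda)$. $\operatorname{Cat}_n(q)=\frac{1}{[n+1]_q}\begin{bmatrix}2n\\ n\end{bmatrix}_q$ is the Mahonian $q$-Catalan number, where $[k]_q=1+q+\cdots+q^{k-1}$ and $\begin{bmatrix}a\\ b\end{bmatrix}_q$ is the Gaussian binomial coefficient. *)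

(* Defs.v *)
From HB Require Import structures.
From mathcomp Require Import all_boot all_order all_algebra.
From mathcomp Require Import fraction.
Set Implicit Arguments. Unset Strict Implicit. Unset Printing Implicit Defensive.
Import Order.TTheory GRing.Theory Num.Theory.
Local Open Scope ring_scope.

Definition RF := {fraction {poly rat}}.
Definition tofracQ (p : {poly rat}) : RF := @FracField.tofrac _ p.
Definition q : RF := tofracQ 'X.

(* Type C_r, weights written in epsilon-coordinates lam : 'I_r -> nat
   (lam i = coefficient of eps_{i+1}); dominant means weakly decreasing.
   rho = (r, r-1, ..., 1).
   Weyl character formula for C_r:
     ch V(lam) = det[x_j^{l_i} - x_j^{-l_i}] / det[x_j^{r-i} - x_j^{-(r-i)}],
   with l_i = lam_i + r - i (0-indexed i), evaluated in the field F. *)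
Definition alternantC (F : fieldType) (r : nat) (x : 'I_r -> F) (mu : 'I_r -> nat) : F :=
  \det (\matrix_(i < r, j < r) (x j ^+ mu i - (x j)^-1 ^+ mu i)).

Definition rhoC (r : nat) (i : 'I_r) : nat := (r - i)%N.

Definition charC (F : fieldType) (r : nat) (lam : 'I_r -> nat) (x : 'I_r -> F) : F :=
  alternantC x (fun i => (lam i + rhoC i)%N) / alternantC x (@rhoC r).

Definition omegaC (r : nat) : 'I_r -> nat := fun _ => 1%N.

(* principal specialization x_i = q^i (1 <= i <= r); with 0-indexed j : 'I_r,
   x_j = q^(j+1). *)
Definition psC (r : nat) (lam : 'I_r -> nat) : RF :=
  charC lam (fun j : 'I_r => q ^+ (j.+1)).

Definition lowest_power (f : RF) (eta : int) : Prop :=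
  exists p : {poly rat}, p`_0 != 0 /\ f = q ^ eta * tofracQ p.

Definition is_normalized_ps (f g : RF) : Prop :=
  exists eta : int, lowest_power f eta /\ g = q ^ (- eta) * f.

Definition qint (k : nat) : RF := \sum_(i < k) q ^+ i.
Definition qfact (k : nat) : RF := \prod_(1 <= i < k.+1) qint i.
Definition qbinom (a b : nat) : RF := qfact a / (qfact b * qfact (a - b)).
Definition qCat (n : nat) : RF := (qint n.+1)^-1 * qbinom (2 * n) n.

(* Main.v *)
Require Import Defs.
From HB Require Import structures.
From mathcomp Require Import all_boot all_order all_algebra.
From mathcomp Require Import fraction.
Import Order.TTheory GRing.Theory Num.Theory.
Local Open Scope ring_scope.
From mathcomp Require Import ring zify.
Set Implicit Arguments. Unset Strict Implicit. Unset Printing Implicit Defensive.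
Import Order.TTheory GRing.Theory Num.Theory.
Local Open Scope ring_scope.

Section Det.
Variable F : fieldType.

Fixpoint cheb (j : nat) : {poly F} :=
  match j with
  | 0 => 1
  | S j' => match j' with
            | 0 => 'X
            | S j'' => 'X * cheb j' - cheb j''
            end
  end.

Lemma chebSS j : cheb j.+2 = 'X * cheb j.+1 - cheb j.
Proof. by []. Qed.

Definition cheb_ok j := (forall k, (j < k)%N -> (cheb j)`_k = 0) /\ (cheb j)`_j = 1.

Lemma cheb_coef j : cheb_ok j.
Proof.
suff: cheb_ok j /\ cheb_ok j.+1 by case.
elim: j => [|j [[IH1 IH2] [IH3 IH4]]].
  split; split.
  - by move=> k k0; rewrite coefC; case: k k0.
  - by rewrite coefC.
  - by move=> k k1; rewrite /= coefX; case: k k1 => [|[]].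
  - by rewrite /= coefX.
split; first by split.
split.
  move=> k hk; rewrite chebSS coefB coefXM.
  case: k hk => [//|k] hk /=.
  by rewrite IH3 // IH1 ?subr0 //; apply: ltn_trans hk.
by rewrite chebSS coefB coefXM /= IH4 IH1 ?subr0.
Qed.

Lemma cheb_eval j (z w : F) : z * w = 1 ->
  (cheb j).[z + w] * (z - w) = z ^+ j.+1 - w ^+ j.+1.
Proof.
move=> zw.
suff: (cheb j).[z + w] * (z - w) = z ^+ j.+1 - w ^+ j.+1 /\
      (cheb j.+1).[z + w] * (z - w) = z ^+ j.+2 - w ^+ j.+2 by case.
elim: j => [|j [IH1 IH2]].
  split; first by rewrite /= hornerC mul1r !expr1.
  rewrite /= hornerX.
  have : (z + w) * (z - w) - (z ^+ 2 - w ^+ 2) = 0 by ring.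
  by move/eqP; rewrite subr_eq0 => /eqP.
split; first by [].
rewrite chebSS hornerD hornerN hornerM hornerX mulrBl -mulrA IH2 IH1.
rewrite !(exprS z j.+2) !(exprS w j.+2) !(exprS z j.+1) !(exprS w j.+1).
move: (z ^+ j.+1) (w ^+ j.+1) => A B.
have E : (z + w) * (z * A - w * B) - (A - B)
   - (z * (z * A) - w * (w * B)) = (z * w - 1) * (A - B) by ring.
by move: E; rewrite zw subrr mul0r => /eqP; rewrite subr_eq0 => /eqP.
Qed.

Lemma det_sympl r (z w : 'I_r -> F) : (forall i, z i * w i = 1) ->
  \det (\matrix_(j < r, i < r) (z i ^+ j.+1 - w i ^+ j.+1)) =
  \prod_(i < r) (z i - w i) *
  \prod_(i < r) \prod_(j < r | (i < j)%N) ((z j + w j) - (z i + w i)).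
Proof.
move=> zw.
pose T : 'M[F]_r := \matrix_(j < r, k < r) (cheb j)`_k.
pose y : 'rV[F]_r := \row_i (z i + w i).
pose D : 'rV[F]_r := \row_i (z i - w i).
have -> : \matrix_(j < r, i < r) (z i ^+ j.+1 - w i ^+ j.+1) =
   T *m Vandermonde r y *m diag_mx D.
  apply/matrixP => j i; rewrite mul_mx_diag !mxE.
  rewrite -cheb_eval // (horner_coef_wide (n:=r)).
    congr (_ * _); apply: eq_bigr => k _; rewrite !mxE.
    by [].
  apply/leq_sizeP => k hk; case: (cheb_coef j) => H _; apply: H.
  by apply: leq_trans hk.
rewrite !det_mulmx det_trig; last first.
  by apply/is_trig_mxP => j k hjk; rewrite mxE; case: (cheb_coef j) => H _; apply: H.
rewrite big1 ?mul1r; last by move=> j _; rewrite mxE; case: (cheb_coef j).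
rewrite det_Vandermonde det_diag mulrC; congr (_ * _).
  by apply: eq_bigr => i _; rewrite mxE.
by apply: eq_bigr => i _; apply: eq_bigr => j _; rewrite !mxE.
Qed.

End Det.

Lemma reidx1 (R : comNzRingType) r (f : nat -> R) :
  \prod_(i < r) f (r - i)%N = \prod_(1 <= a < r.+1) f a.
Proof.
elim: r => [|r IH]; first by rewrite big_ord0 big_geq.
rewrite big_ord_recl big_nat_recr //= subn0 mulrC; congr (_ * _).
by rewrite -IH; apply: eq_bigr => i _; rewrite /bump /= add1n subSS.
Qed.

Lemma reidx2 (R : comNzRingType) r (g : nat -> nat -> R) :
  \prod_(i < r) \prod_(j < r | (i < j)%N) g (r - j)%N (r - i)%N =
  \prod_(1 <= a < r.+1) \prod_(1 <= b < a) g b a.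
Proof.
elim: r => [|r IH]; first by rewrite big_ord0 big_geq.
rewrite big_ord_recl big_nat_recr //= mulrC; congr (_ * _).
  rewrite -IH; apply: eq_bigr => i _.
  rewrite big_mkcond big_ord_recl /= mul1r -big_mkcond /=.
  apply: eq_big => [j|j _]; first by rewrite /bump /= !add1n ltnS.
  by rewrite /bump /= !add1n !subSS.
rewrite big_mkcond big_ord_recl /= mul1r subn0.
rewrite -(reidx1 r (fun b => g b r.+1)); apply: eq_bigr => j _.
by rewrite /bump /= add1n subSS.
Qed.

Lemma tel (R : comNzRingType) r (g : nat -> R) :
  (\prod_(1 <= b < r.+1) g b.+2) * (g 1%N * g 2%N) =
  (\prod_(1 <= b < r.+1) g b) * (g r.+1 * g r.+2).
Proof.
elim: r => [|r IH]; first by rewrite !big_geq // mul1r.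
rewrite (big_nat_recr r.+1) // (big_nat_recr r.+1 _ g) //=.
rewrite mulrAC IH; ring.
Qed.

Section Gen.
Variable F : fieldType.
Variable t : F.
Hypothesis t0 : t != 0.

Definition qi k := \sum_(i < k) t ^+ i.
Hypothesis t1 : t - 1 != 0.
Hypothesis qi0 : forall k, (0 < k)%N -> qi k != 0.

Lemma qiE k : (t - 1) * qi k = t ^+ k - 1.
Proof. by rewrite subrX1. Qed.

Lemma qi_add m k : qi (m + k) = qi m + t ^+ m * qi k.
Proof.
rewrite /qi big_split_ord /=; congr (_ + _).
by rewrite mulr_sumr; apply: eq_bigr => i _; rewrite exprD.
Qed.

Lemma qi1 : qi 1 = 1.
Proof. by rewrite /qi big_ord1 expr0. Qed.

Definition gf k := \prod_(1 <= i < k.+1) qi i.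
Lemma gfS k : gf k.+1 = gf k * qi k.+1.
Proof. by rewrite /gf big_nat_recr. Qed.
Lemma gf0 : gf 0 = 1.
Proof. by rewrite /gf big_geq. Qed.
Lemma gf1 : gf 1 = 1.
Proof. by rewrite gfS gf0 qi1 mulr1. Qed.
Lemma gf_neq0 k : gf k != 0.
Proof.
elim: k => [|k IH]; first by rewrite gf0 oner_eq0.
by rewrite gfS mulf_neq0 // qi0.
Qed.

Definition dd (a : nat) : F := t ^+ a - t^-1 ^+ a.
Definition YY (a : nat) : F := t ^+ a + t^-1 ^+ a.

Lemma dd_fact a : dd a = t^-1 ^+ a * ((t - 1) * qi (a + a)).
Proof.
have qa : t ^+ a != 0 by rewrite expf_neq0.
rewrite qiE /dd exprVn exprD; field; exact qa.
Qed.

Lemma YY_fact b a : (b <= a)%N ->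
  YY b - YY a = - t^-1 ^+ a * ((t - 1) * qi (a - b)) * ((t - 1) * qi (a + b)).
Proof.
move=> /subnKC <-; move: (a - b)%N => k.
rewrite addKn !qiE /YY.
have qb : t ^+ b != 0 by rewrite expf_neq0.
have qk : t ^+ k != 0 by rewrite expf_neq0.
rewrite !exprVn !exprD.
field. by rewrite qb qk.
Qed.
End Gen.

Definition Dd (F : fieldType) (t : F) c r := \prod_(1 <= a < r.+1) dd t (c + a).
Definition FF (F : fieldType) (t : F) c r :=
  \prod_(1 <= a < r.+1) \prod_(1 <= b < a) (YY t (c + b) - YY t (c + a)).
Definition AA (F : fieldType) (t : F) c r := Dd t c r * FF t c r.
Definition PP (F : fieldType) (t : F) c r :=
  \prod_(1 <= b < r.+1) (YY t (c + b) - YY t (c + r.+1)).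

Section Main.
Variable F : fieldType.
Variable t : F.
Hypothesis t0 : t != 0.
Hypothesis t1 : t - 1 != 0.
Hypothesis qi0 : forall k, (0 < k)%N -> qi t k != 0.

Lemma AA_S c r : AA t c r.+1 = AA t c r * (dd t (c + r.+1) * PP t c r).
Proof.
rewrite /AA /Dd /FF /PP big_nat_recr // (big_nat_recr r.+1) //=.
ring.
Qed.

Lemma AA_0 c : AA t c 0 = 1.
Proof. by rewrite /AA /Dd /FF !big_geq // mulr1. Qed.

Lemma PP_fact c r : PP t c r =
  (- t^-1 ^+ (c + r.+1)) ^+ r *
  (\prod_(1 <= b < r.+1) ((t - 1) * qi t (r.+1 - b))) *
  (\prod_(1 <= b < r.+1) ((t - 1) * qi t (c + r.+1 + (c + b)))).
Proof.
rewrite /PP.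
transitivity (\prod_(1 <= b < r.+1) (- t^-1 ^+ (c + r.+1) *
   ((t - 1) * qi t (r.+1 - b)) * ((t - 1) * qi t (c + r.+1 + (c + b))))).
  apply: eq_big_nat => b /andP[h1 h2].
  rewrite YY_fact //; last by lia.
  by rewrite subnDl.
by rewrite !big_split /= prodr_const_nat subn1.
Qed.

Lemma key r :
  t ^+ r.+1 * dd t (1 + r.+1) * PP t 1 r * (qi t r.+3 * qi t r.+2) =
  dd t (0 + r.+1) * PP t 0 r * (qi t (r.+1 + r.+1).+1 * qi t (r.+1 + r.+1).+2).
Proof.
rewrite !PP_fact !dd_fact //.
set S := \prod_(1 <= b < r.+1) ((t - 1) * qi t (r.+1 - b)).
pose g b := (t - 1) * qi t (r.+1 + b).
have T0E : \prod_(1 <= b < r.+1) ((t - 1) * qi t (0 + r.+1 + (0 + b))) =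
    \prod_(1 <= b < r.+1) g b by apply: eq_bigr => b _; rewrite /g !add0n.
have T1E : \prod_(1 <= b < r.+1) ((t - 1) * qi t (1 + r.+1 + (1 + b))) =
    \prod_(1 <= b < r.+1) g b.+2.
  by apply: eq_bigr => b _; rewrite /g; congr (_ * qi t _); lia.
rewrite T0E T1E.
have TEL := tel r g.
move: TEL; rewrite /g.
have -> : (r.+1 + 1 = r.+2)%N by lia.
have -> : (r.+1 + 2 = r.+3)%N by lia.
have -> : (r.+1 + r.+2 = (r.+1 + r.+1).+1)%N by lia.
rewrite -/g.
set T0 := \prod_(1 <= b < r.+1) g b.
set T1 := \prod_(1 <= b < r.+1) g b.+2.
move=> TEL.
have q2 : qi t r.+2 != 0 by apply: qi0.
have q3 : qi t r.+3 != 0 by apply: qi0.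
have T1E' : T1 = T0 * ((t - 1) * qi t (r.+1 + r.+1) * ((t - 1) * qi t (r.+1 + r.+1).+1))
   / ((t - 1) * qi t r.+2 * ((t - 1) * qi t r.+3)).
  rewrite -TEL; field; by rewrite t1 q2 q3.
rewrite T1E' !add0n !add1n.
have -> : (r.+2 + r.+2 = (r.+1 + r.+1).+2)%N by lia.
rewrite (exprS t^-1 r.+1) -mulrN exprMn.
set X := (- t^-1 ^+ r.+1) ^+ r; clearbody X.
rewrite (exprS t^-1 r) exprVn (exprS t r).
have tr : t ^+ r != 0 by rewrite expf_neq0.
move: (t ^+ r) tr => P tr.
field. by rewrite t0 tr t1 q2 q3.
Qed.

Lemma mainI r : t ^+ 'C(r.+1, 2) * AA t 1 r * (gf t r.+2 * gf t r.+1) =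
  AA t 0 r * gf t (r.+1 + r.+1).
Proof.
elim: r => [|r IH].
  rewrite !AA_0 /= gf1; ring.
rewrite !AA_S binS bin1 exprD.
have -> : gf t (r.+2 + r.+2) = gf t (r.+1 + r.+1) * qi t (r.+1 + r.+1).+1 * qi t (r.+1 + r.+1).+2.
  by rewrite -!gfS addSn addnS.
rewrite (gfS t r.+2).
have K := key r.
move: IH K; move: (t ^+ 'C(r.+1, 2)) (t ^+ r.+1) => C U IH K.
transitivity ((C * AA t 1 r * (gf t r.+2 * gf t r.+1)) *
   (U * dd t (1 + r.+1) * PP t 1 r * (qi t r.+3 * qi t r.+2))).
  rewrite (gfS t r.+1); ring.
rewrite IH K; ring.
Qed.

Lemma AA0_neq0 r : AA t 0 r != 0.
Proof.
rewrite /AA /Dd /FF; apply: mulf_neq0.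
  rewrite prodf_seq_neq0; apply/allP => a; rewrite mem_index_iota => /andP[h1 h2].
  rewrite dd_fact // !mulf_neq0 ?expf_neq0 ?invr_eq0 //; apply: qi0; lia.
rewrite prodf_seq_neq0; apply/allP => a; rewrite mem_index_iota => /andP[h1 h2].
rewrite prodf_seq_neq0; apply/allP => b; rewrite mem_index_iota => /andP[h3 h4].
rewrite YY_fact //; last by lia.
rewrite !mulf_neq0 ?oppr_eq0 ?expf_neq0 ?invr_eq0 //; apply: qi0; lia.
Qed.
End Main.

Lemma alt_AA (F : fieldType) (t : F) (t0 : t != 0) r c :
  alternantC (fun j : 'I_r => t ^+ j.+1) (fun i : 'I_r => (c + (r - i))%N) = AA t c r.
Proof.
rewrite /alternantC -det_tr.
set z := fun i : 'I_r => t ^+ (c + (r - i)).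
set w := fun i : 'I_r => t^-1 ^+ (c + (r - i)).
have -> : (\matrix_(i, j) ((t ^+ j.+1) ^+ (c + (r - i)) - (t ^+ j.+1)^-1 ^+ (c + (r - i))))^T
   = \matrix_(j < r, i < r) (z i ^+ j.+1 - w i ^+ j.+1).
  apply/matrixP => j i; rewrite !mxE /z /w.
  by rewrite -exprVn exprAC [X in _ - X]exprAC.
rewrite det_sympl; last first.
  by move=> i; rewrite /z /w -exprMn mulfV // expr1n.
rewrite /AA /Dd /FF; congr (_ * _).
  by rewrite -(reidx1 r (fun a => dd t (c + a))).
by rewrite -(reidx2 r (fun b a => YY t (c + b) - YY t (c + a))).
Qed.

Definition gbin (F : fieldType) (t : F) a b := gf t a / (gf t b * gf t (a - b)).

Section Gen2.
Variable F : fieldType.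
Variable t : F.
Hypothesis t0 : t != 0.
Hypothesis t1 : t - 1 != 0.
Hypothesis qi0 : forall k, (0 < k)%N -> qi t k != 0.

Lemma gbin0 a : gbin t a 0 = 1.
Proof.
rewrite /gbin subn0 gf0 mul1r divff //; exact: gf_neq0.
Qed.

Lemma gbin_diag a : gbin t a a = 1.
Proof.
rewrite /gbin subnn gf0 mulr1 divff //; exact: gf_neq0.
Qed.

Lemma pascal b k : gbin t (b + k).+2 b.+1 =
  gbin t (b + k).+1 b + t ^+ b.+1 * gbin t (b + k).+1 b.+1.
Proof.
rewrite /gbin.
have -> : ((b + k).+2 - b.+1 = k.+1)%N by lia.
have -> : ((b + k).+1 - b = k.+1)%N by lia.
have -> : ((b + k).+1 - b.+1 = k)%N by lia.
rewrite (gfS t (b + k).+1) (gfS t b) (gfS t k).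
have -> : ((b + k).+2 = b.+1 + k.+1)%N by lia.
rewrite qi_add.
have h1 := gf_neq0 qi0 (b + k).+1.
have h2 := gf_neq0 qi0 b.
have h3 := gf_neq0 qi0 k.
have h4 : qi t b.+1 != 0 by apply: qi0.
have h5 : qi t k.+1 != 0 by apply: qi0.
rewrite -(addn1 (b + k)).
move: (gf t (b + k + 1)) (gf t b) (gf t k) (qi t b.+1) (qi t k.+1) (t ^+ b.+1) h1 h2 h3 h4 h5
  => A B C D E T h1 h2 h3 h4 h5.
field. by rewrite h2 h3 h4 h5.
Qed.

Lemma catalan m : (qi t m.+2)^-1 * gbin t (2 * m.+1) m.+1 =
  gbin t (2 * m.+1) m.+1 - t * gbin t (2 * m.+1) m.+2.
Proof.
rewrite /gbin.
have -> : (2 * m.+1 - m.+1 = m.+1)%N by lia.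
have -> : (2 * m.+1 - m.+2 = m)%N by lia.
rewrite (gfS t m.+1) (gfS t m).
have -> : qi t m.+2 = qi t (1 + m.+1) by [].
rewrite qi_add (qi1 t) expr1.
have h1 := gf_neq0 qi0 m.
have h4 : qi t m.+1 != 0 by apply: qi0.
have h5 : 1 + t * qi t m.+1 != 0.
  by rewrite -(expr1 t) -(qi1 t) -qi_add; apply: qi0.
move: (gf t (2 * m.+1)) (gf t m) (qi t m.+1) h1 h4 h5 => A B C h1 h4 h5.
field. by rewrite h1 h4 h5.
Qed.

Lemma catI r : t ^+ 'C(r.+1, 2) * (AA t 1 r / AA t 0 r) =
  (qi t r.+2)^-1 * gbin t (2 * r.+1) r.+1.
Proof.
have M := mainI t0 t1 qi0 r.
rewrite /gbin.
have -> : (2 * r.+1 - r.+1 = r.+1)%N by lia.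
have -> : (2 * r.+1 = r.+1 + r.+1)%N by lia.
have hA := AA0_neq0 t0 t1 qi0 r.
have hG := gf_neq0 qi0 r.+1.
have hq : qi t r.+2 != 0 by apply: qi0.
have E : gf t (r.+1 + r.+1) = t ^+ 'C(r.+1, 2) * AA t 1 r * (gf t r.+2 * gf t r.+1) / AA t 0 r.
  by rewrite M mulrAC divff // mul1r.
rewrite E (gfS t r.+1).
move: (t ^+ 'C(r.+1, 2)) (AA t 1 r) (AA t 0 r) (gf t r.+1) (qi t r.+2) hA hG hq
  => C A1 A0 G Q hA hG hq.
field. by rewrite hA hG hq.
Qed.
End Gen2.

Lemma tofrac_neq0 (p : {poly rat}) : p.[0] != 0 -> tofracQ p != 0.
Proof.
move=> h; rewrite /tofracQ tofrac_eq0; apply: contraNneq h => ->.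
by rewrite horner0.
Qed.

Lemma q_neq0 : q != 0.
Proof. by rewrite /q /tofracQ tofrac_eq0 polyX_eq0. Qed.

Lemma qm1_neq0 : q - 1 != 0.
Proof.
have -> : q - 1 = tofracQ ('X - 1) by rewrite /tofracQ tofracB tofrac1.
by apply: tofrac_neq0; rewrite !hornerE oppr_eq0 oner_eq0.
Qed.

Lemma qi_neq0 k : (0 < k)%N -> qi q k != 0.
Proof.
move=> hk.
have -> : qi q k = tofracQ (\sum_(i < k) 'X ^+ i).
  rewrite /qi /tofracQ rmorph_sum; apply: eq_bigr => i _.
  by rewrite rmorphXn.
apply: tofrac_neq0; rewrite horner_sum.
case: k hk => // k _; rewrite big_ord_recl /= hornerXn expr0n /=.
rewrite big1; last by move=> i _; rewrite hornerXn expr0n.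
by rewrite addr0 oner_eq0.
Qed.

Fixpoint gb (a b : nat) {struct a} : {poly rat} :=
  match b with
  | 0 => 1
  | S b' => match a with
            | 0 => 0
            | S a' => gb a' b' + 'X ^+ b * gb a' b
            end
  end.

Lemma gb_coef0 a b : (b <= a)%N -> (gb a b)`_0 = 1.
Proof.
elim: a b => [|a IH] [|b] //= hb.
  by rewrite coef1.
by rewrite coef1.
by rewrite coefD coefXnM /= IH // addr0.
Qed.

Lemma gb_frac a b : tofracQ (gb a b) = if (b <= a)%N then gbin q a b else 0.
Proof.
elim: a b => [|a IH] [|b].
- by rewrite /= /tofracQ tofrac1 (gbin0 qi_neq0).
- by rewrite /= /tofracQ tofrac0.
- by rewrite /= /tofracQ tofrac1 (gbin0 qi_neq0).
have IH1 := IH b; have IH2 := IH b.+1; rewrite /tofracQ in IH1 IH2.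
rewrite /= /tofracQ tofracD tofracM tofracXn IH1 IH2 -/q ltnS.
have Xq : (@FracField.tofrac _ 'X : RF) = q := erefl.
rewrite Xq.
case: (ltngtP b a) => hab.
- have [k ek] : exists k, a = (b + k).+1 by exists (a - b.+1)%N; lia.
  by rewrite ek (pascal q_neq0 qm1_neq0 qi_neq0).
- by rewrite mulr0 addr0.
- by subst b; rewrite mulr0 addr0 !(gbin_diag qi_neq0).
Qed.

Unset Implicit Arguments.

Theorem theorem5p2 (n : nat) (hn : (2 <= n)%N) :
  is_normalized_ps (psC (@omegaC n.-1)) (q ^+ 'C(n, 2) * psC (@omegaC n.-1))
  /\ q ^+ 'C(n, 2) * psC (@omegaC n.-1) = qCat n.
Proof.
case: n hn => [//|r] hr.
change (r.+1.-1) with r.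
have Hps : psC (@omegaC r) = AA q 1 r / AA q 0 r.
  rewrite /psC /charC; congr (_ / _).
    exact: (alt_AA q_neq0 r 1).
  exact: (alt_AA q_neq0 r 0).
have Hcat : q ^+ 'C(r.+1, 2) * psC (@omegaC r) = qCat r.+1.
  rewrite Hps (catI q_neq0 qm1_neq0 qi_neq0 r).
  reflexivity.
split; last exact Hcat.
exists (- ('C(r.+1, 2))%:Z); split.
  exists (gb (2 * r.+1) r.+1 - 'X * gb (2 * r.+1) r.+2); split.
    rewrite coefB coefXM eqxx gb_coef0; last by lia.
    by rewrite subr0 oner_eq0.
  have Ep : tofracQ (gb (2 * r.+1) r.+1 - 'X * gb (2 * r.+1) r.+2) = qCat r.+1.
    have E1 := gb_frac (2 * r.+1) r.+1.
    have E2 := gb_frac (2 * r.+1) r.+2.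
    rewrite /tofracQ in E1 E2.
    have h1 : (r.+1 <= 2 * r.+1)%N by lia.
    have h2 : (r.+2 <= 2 * r.+1)%N by lia.
    rewrite h1 in E1; rewrite h2 in E2.
    have Xq : (@FracField.tofrac _ 'X : RF) = q := erefl.
    rewrite /tofracQ tofracB tofracM E1 E2 Xq.
    rewrite -(catalan q_neq0 qm1_neq0 qi_neq0 r).
    reflexivity.
  rewrite Ep -Hcat -exprnN mulKf; first by [].
  exact: (expf_neq0 _ q_neq0).
by rewrite opprK -exprnP.
Qed.
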